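(* Let $n>k\ge1$ and $0\le r\le k$. The number of pairs $(A,B)\in M_k(\mathbb{F}_q)\times M_{k,n-k}(\mathbb{F}_q)$ with $\operatorname{rank}\mathcal{C}(A,B)=r$ (i.e. with $r$-dimensional reachability subspace) is $${k\brack r}_q\, q^{(k-r)^2}\prod_{i=k-r+1}^{k}(q^n-q^i).$$ In particular, the number of reachable pairs (those with $\operatorname{rank}\mathcal{C}(A,B)=k$) is $\prod_{i=1}^{k}(q^n-q^i)$.
   Context: $\mathbb{F}_q$ is the finite field with $q$ elements. For $(A,B)\in M_k(\mathbb{F}_q)\times M_{k,n-k}(\mathbb{F}_q)$, the reachability matrix is $\mathcal{C}(A,B)=[\,B\ \ AB\ \ \cdots\ \ A^{k-1}B\,]$. ${k\brack r}_q=\prod_{i=0}^{r-1}\frac{q^{k-i}-1}{q^{i+1}-1}$ denotes the $q$-binomial coefficient (the number of $r$-dimensional subspaces of $\mathbb{F}_q^k$). Empty products equal $1$. *)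

(* Defs.v *)
From HB Require Import structures.
From mathcomp Require Import all_boot all_order all_algebra.
Set Implicit Arguments. Unset Strict Implicit. Unset Printing Implicit Defensive.
Import GRing.Theory.
Local Open Scope ring_scope.

Definition reach_mx (F : fieldType) (k m : nat) (A : 'M[F]_k) (B : 'M[F]_(k, m)) :
  'M[F]_(k, \sum_(j < k) m) :=
  \mxrow_(j < k) (A ^+ j *m B).

Definition qbinom (q k r : nat) : rat :=
  \prod_(i < r) (((q ^ (k - i))%:R - 1) / ((q ^ i.+1)%:R - 1)).

(* Main.v *)
Require Import Defs.
From HB Require Import structures.
From mathcomp Require Import all_boot all_order all_algebra all_field.
From mathcomp Require Import ring lra zify.
Set Implicit Arguments. Unset Strict Implicit. Unset Printing Implicit Defensive.
Import Order.TTheory GRing.Theory Num.Theory.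
Local Open Scope ring_scope.

Section Kry.
Variable F : fieldType.

Definition Kn k m (N : nat) (A : 'M[F]_k) (B : 'M[F]_(m, k)) : 'M[F]_k :=
  (\sum_(i < N) <<B *m A ^+ i>>)%MS.

Lemma KnS k m N (A : 'M[F]_k) (B : 'M_(m,k)) :
  Kn N.+1 A B = (Kn N A B + <<B *m A ^+ N>>)%MS.
Proof. by rewrite /Kn big_ord_recr. Qed.

Lemma Kn_mono k m N M (A : 'M[F]_k) (B : 'M_(m,k)) :
  (N <= M)%N -> (Kn N A B <= Kn M A B)%MS.
Proof.
move=> le; apply/sumsmx_subP => i _.
exact: (sumsmx_sup (widen_ord le i)).
Qed.

Lemma Kn_term k m N i (A : 'M[F]_k) (B : 'M_(m,k)) :
  (i < N)%N -> (B *m A ^+ i <= Kn N A B)%MS.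
Proof. by move=> lt; rewrite -genmxE; exact: (sumsmx_sup (Ordinal lt)). Qed.

Lemma Kn_sub k m N (A : 'M[F]_k) (B : 'M_(m,k)) p (U : 'M_(p,k)) :
  (B <= U)%MS -> (U *m A <= U)%MS -> (Kn N A B <= U)%MS.
Proof.
move=> BU UA; apply/sumsmx_subP => i _; rewrite genmxE.
elim: (nat_of_ord i) => [|j IH]; first by rewrite expr0 mulmx1.
by rewrite exprSr mulmxA; apply: submx_trans UA; apply: submxMr.
Qed.

Lemma KnA k m N (A : 'M[F]_k) (B : 'M_(m,k)) :
  (Kn N A B *m A <= Kn N.+1 A B)%MS.
Proof.
rewrite /Kn sumsmxMr_gen; apply/sumsmx_subP => i _.
apply: (submx_trans (B := B *m A ^+ i *m A)).
  by rewrite genmxE; apply: submxMr; rewrite genmxE.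
rewrite -mulmxA mulmxE -exprSr.
by apply: (Kn_term (N := N.+1)); rewrite ltnS.
Qed.

Lemma Kn_stab k m (A : 'M[F]_k) (B : 'M_(m,k)) N :
  (B *m A ^+ N <= Kn k A B)%MS.
Proof.
have key: forall j, (j <= \rank (Kn j A B))%N \/
    exists2 i, (i < j)%N & (Kn i.+1 A B <= Kn i A B)%MS.
  elim => [|j [IH|[i lij IH]]]; [by left | | by right; exists i => //; apply: ltnW].
  case: (boolP (Kn j.+1 A B <= Kn j A B)%MS) => h; first by right; exists j.
  left; have := mxrank_leqif_sup (Kn_mono A B (leqnSn j)).
  move/ltn_leqif; rewrite h => /= lt; exact: leq_ltn_trans IH lt.
have [bad|[i lik sti]] := key k.+1.
  by have := leq_trans bad (rank_leq_col _); rewrite ltnn.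
apply: (submx_trans (B := Kn i A B)); last by apply: Kn_mono; rewrite -ltnS.
elim: N => [|N IH].
  apply: submx_trans sti; exact: Kn_term.
rewrite exprSr -mulmxE mulmxA; apply: submx_trans sti.
apply: submx_trans (KnA _ _ _); exact: submxMr.
Qed.

Definition Kr k m (A : 'M[F]_k) (B : 'M[F]_(m, k)) := Kn k A B.

Lemma Kr_B k m (A : 'M[F]_k) (B : 'M_(m,k)) : (B <= Kr A B)%MS.
Proof. by have := Kn_stab A B 0; rewrite expr0 mulmx1. Qed.

Lemma Kr_stable k m (A : 'M[F]_k) (B : 'M_(m,k)) : (Kr A B *m A <= Kr A B)%MS.
Proof.
apply: submx_trans (KnA _ _ _) _; apply/sumsmx_subP => i _; rewrite genmxE.
exact: Kn_stab.
Qed.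

Lemma Kn_eq k m N (A : 'M[F]_k) (B : 'M_(m,k)) : (k <= N)%N ->
  (Kn N A B == Kr A B)%MS.
Proof.
move=> le; apply/andP; split; last exact: Kn_mono.
apply: Kn_sub; [exact: Kr_B | exact: Kr_stable].
Qed.

Lemma Kr_transfer k r m (A : 'M[F]_k) (B : 'M_(m,k)) (E : 'M_(r,k))
    (A1 : 'M_r) (B1 : 'M_(m,r)) :
  row_free E -> (r <= k)%N -> E *m A = A1 *m E -> B = B1 *m E ->
  \rank (Kr A B) = \rank (Kr A1 B1).
Proof.
move=> fE rk EA BE.
have pw j : B *m A ^+ j = B1 *m A1 ^+ j *m E.
  elim: j => [|j IH]; first by rewrite !expr0 !mulmx1.
  by rewrite exprSr -mulmxE mulmxA IH -!mulmxA EA exprSr -mulmxE !mulmxA.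
rewrite -(mxrankMfree (Kr A1 B1) fE).
rewrite -(eqmxMr E (eqmxP (Kn_eq A1 B1 rk))).
apply/eqmx_rank/andP; split.
  apply/sumsmx_subP => i _; rewrite genmxE pw; apply: submxMr; exact: Kn_term.
rewrite sumsmxMr_gen; apply/sumsmx_subP => i _; rewrite genmxE.
apply: (submx_trans (B := B1 *m A1 ^+ i *m E)).
  by apply: submxMr; rewrite genmxE.
rewrite -pw; exact: Kn_term.
Qed.
End Kry.
Section Card.
Variable F : finFieldType.
Local Notation q := #|F|.

Lemma card_rowfree m n : (m <= n)%N ->
  #|[set A : 'M[F]_(m, n) | row_free A]| = (\prod_(i < m) (q ^ n - q ^ i))%N.
Proof.
pose fr m := [pred A : 'M[F]_(m, n) | \rank A == m].
have ->: #|[set A : 'M[F]_(m, n) | row_free A]| = #|fr m|.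
  by apply: eq_card => A; rewrite inE.
elim: m => [_ | m IHm /ltnW-le_mn].
  rewrite (@eq_card1 _ (0 : 'M_(0, n))) ?big_ord0 //= => A.
  by rewrite flatmx0 !inE mxrank.unlock !eqxx.
rewrite big_ord_recr /= -{}IHm //.
rewrite -sum_nat_const /= -sum1_card -add1n.
rewrite (partition_big dsubmx (fr m)) /= => [|A]; last first.
  rewrite !inE -{1}(vsubmxK A); move: {A}(_ A) (_ A) => Ad Au Afull.
  rewrite eqn_leq rank_leq_row -(leq_add2l (\rank Au)) -mxrank_sum_cap.
  rewrite {1 3}[@mxrank]lock addsmxE (eqnP Afull) -lock -addnA.
  by rewrite leq_add ?rank_leq_row ?leq_addr.
apply: eq_bigr => A rAm; rewrite (reindex (col_mx^~ A)) /=; last first.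
  exists usubmx => [v _ | vA]; first by rewrite col_mxKu.
  by case/andP=> _ /eqP <-; rewrite vsubmxK.
transitivity #|~: [set v *m A | v in 'rV_m]|; last first.
  rewrite cardsCs setCK card_imset ?card_mx ?card_ord ?mul1n //.
  have [B AB1] := row_freeP rAm; apply: can_inj (mulmx^~ B) _ => v.
  by rewrite -mulmxA AB1 mulmx1.
rewrite -sum1_card; apply: eq_bigl => v; rewrite !inE col_mxKd eqxx.
rewrite andbT eqn_leq rank_leq_row /= -(leq_add2r (\rank (v :&: A)%MS)).
rewrite -addsmxE mxrank_sum_cap (eqnP rAm) addnAC leq_add2r.
rewrite (ltn_leqif (mxrank_leqif_sup _)) ?capmxSl // sub_capmx submx_refl.
by congr (~~ _); apply/submxP/imsetP=> [] [u]; exists u.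
Qed.

Lemma card_sub_rows p n k (M : 'M[F]_(k, n)) :
  #|[set X : 'M[F]_(p, n) | (X <= M)%MS]| = (q ^ (p * \rank M))%N.
Proof.
have ->: [set X : 'M[F]_(p, n) | (X <= M)%MS] =
    [set W *m row_base M | W in [set: 'M[F]_(p, \rank M)]].
  apply/setP => X; rewrite inE; apply/idP/imsetP => [XM | [W _ ->]].
    have : (X <= row_base M)%MS by rewrite eq_row_base.
    by case/submxP => W ->; exists W; rewrite ?inE.
  by rewrite -(eq_row_base M) submxMl.
rewrite card_imset ?cardsT ?card_mx //.
have [C BC] := row_freeP (row_base_free M).
by apply: can_inj (mulmx^~ C) _ => W; rewrite -mulmxA BC mulmx1.
Qed.

Lemma card_ker r k (E : 'M[F]_(r, k)) : row_free E ->
  #|[set Z : 'M[F]_k | E *m Z == 0]| = (q ^ (k * (k - r)))%N.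
Proof.
move=> fE.
have ->: [set Z : 'M[F]_k | E *m Z == 0] =
    [set trmx Y | Y in [set Y : 'M[F]_k | (Y <= kermx E^T)%MS]].
  apply/setP => Z; rewrite inE; apply/idP/imsetP => [/eqP EZ | [Y]].
    exists Z^T; last by rewrite trmxK.
    by rewrite inE sub_kermx -trmx_mul EZ trmx0.
  rewrite inE sub_kermx => /eqP YE ->.
  by rewrite -(trmxK E) -trmx_mul YE trmx0.
rewrite card_imset; last exact: trmx_inj.
by rewrite card_sub_rows mxrank_ker mxrank_tr (eqP fE).
Qed.
End Card.

Section Fiber.
Variable F : finFieldType.
Local Notation q := #|F|.

Definition Rset r m := [set AB : 'M[F]_r * 'M[F]_(m, r) | \rank (Kr AB.1 AB.2) == r].

Lemma fiber_E r k m (E : 'M[F]_(r, k)) : row_free E -> (r <= k)%N ->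
  #|[set AB : 'M[F]_k * 'M[F]_(m, k) | (Kr AB.1 AB.2 == E)%MS]|
  = (#|Rset r m| * q ^ (k * (k - r)))%N.
Proof.
move=> fE rk; have [Ei EEi] := row_freeP fE.
have subE p (X : 'M[F]_(p, k)) : (X <= E)%MS -> X = X *m Ei *m E.
  by case/submxP => W ->; rewrite -(mulmxA W) EEi mulmx1.
pose D := setX (Rset r m) [set Z : 'M[F]_k | E *m Z == 0].
pose phi (x : ('M[F]_r * 'M[F]_(m, r)) * 'M[F]_k) :=
  (Ei *m x.1.1 *m E + x.2, x.1.2 *m E).
have ->: [set AB : 'M[F]_k * 'M[F]_(m, k) | (Kr AB.1 AB.2 == E)%MS] = phi @: D.
  apply/setP => [[A B]]; rewrite inE /=; apply/idP/imsetP => [KE | ].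
    have KrE := eqmxP KE.
    pose A1 := E *m A *m Ei; pose B1 := B *m Ei.
    have EAE : (E *m A <= E)%MS.
      case/andP: KE => sKE sEK.
      apply: (submx_trans (B := Kr A B *m A)); first exact: submxMr.
      exact: submx_trans (Kr_stable A B) sKE.
    have BE : B = B1 *m E by apply: subE; rewrite -KrE; exact: Kr_B.
    have EA : E *m A = A1 *m E by apply: subE.
    exists ((A1, B1), A - Ei *m A1 *m E); last by rewrite /phi /= addrC subrK -BE.
    rewrite inE /= !inE /=; apply/andP; split.
      by rewrite -(Kr_transfer fE rk EA BE) KrE (eqP fE).
    by rewrite mulmxBr !mulmxA EEi mul1mx -[E *m A *m Ei]/A1 -EA subrr.
  case=> [[[A1 B1] Z]]; rewrite inE /= !inE /= => /andP [rK /eqP EZ] [-> ->].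
  have EA : E *m (Ei *m A1 *m E + Z) = A1 *m E.
    by rewrite mulmxDr EZ addr0 !mulmxA EEi mul1mx.
  have sub : (Kr (Ei *m A1 *m E + Z) (B1 *m E) <= E)%MS.
    apply: Kn_sub; first exact: submxMl.
    by rewrite EA submxMl.
  rewrite -(mxrank_leqif_eq sub).2 (Kr_transfer fE rk EA (erefl _)) (eqP rK).
  by rewrite (eqP fE).
rewrite card_in_imset ?cardsX ?card_ker //.
move=> [[A1 B1] Z] [[A2 B2] Z2]; rewrite !inE /= => /andP [_ /eqP E1] /andP [_ /eqP E2].
rewrite /phi /= => [[eA eB]].
have eB' : B1 = B2 by rewrite -[B1]mulmx1 -[B2]mulmx1 -EEi !mulmxA eB.
have eA1 : A1 *m E = A2 *m E.
  by move: (congr1 (mulmx E) eA); rewrite !mulmxDr E1 E2 !addr0 !mulmxA EEi !mul1mx.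
have eA' : A1 = A2 by rewrite -[A1]mulmx1 -[A2]mulmx1 -EEi !mulmxA eA1.
by move: eA; rewrite eA' eB' => /addrI ->.
Qed.
End Fiber.

Section Count.
Variable F : finFieldType.
Local Notation q := #|F|.

Lemma card_bases p r k (U : 'M[F]_(p, k)) : \rank U = r ->
  #|[set E : 'M[F]_(r, k) | row_free E && (U == E)%MS]|
  = #|[set P : 'M[F]_(r, r) | row_free P]|.
Proof.
move=> rU.
have [E0 fE0 UE0] : exists2 E0 : 'M[F]_(r, k), row_free E0 & (U == E0)%MS.
  have gen r' : \rank U = r' -> exists2 E0 : 'M[F]_(r', k), row_free E0 & (U == E0)%MS.
    move=> e; subst r'; exists (row_base U); first exact: row_base_free.
    by apply/eqmxP; apply: eqmx_sym; exact: eq_row_base.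
  exact: gen.
have [Ei EEi] := row_freeP fE0.
have ->: [set E : 'M[F]_(r, k) | row_free E && (U == E)%MS] =
    [set P *m E0 | P in [set P : 'M[F]_(r, r) | row_free P]].
  apply/setP => E; rewrite inE; apply/idP/imsetP => [/andP [fE UE] | [P]].
    have : (E <= E0)%MS by rewrite -(eqmxP UE0) (eqmxP UE).
    case/submxP => P defE; exists P; rewrite // inE.
    by rewrite /row_free -(mxrankMfree P fE0) -defE.
  rewrite inE => fP ->.
  have fPE : row_free (P *m E0) by rewrite /row_free (mxrankMfree P fE0).
  rewrite fPE /=; apply/eqmxP; apply: (eqmx_trans (eqmxP UE0)).
  apply: eqmx_sym; apply/eqmxP.
  by rewrite -(mxrank_leqif_eq (submxMl P E0)).2 (mxrankMfree P fE0) (eqP fP) (eqP fE0).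
rewrite card_imset //.
by apply: can_inj (mulmx^~ Ei) _ => P; rewrite -mulmxA EEi mulmx1.
Qed.

Lemma sum_bool_card (T : finType) (P : pred T) :
  (\sum_(x : T) (P x : nat))%N = #|[set x | P x]|.
Proof.
rewrite -sum1_card [RHS]big_mkcond /=; apply: eq_bigr => x _; rewrite inE.
by case: (P x).
Qed.

Definition Nset k r m :=
  [set AB : 'M[F]_k * 'M[F]_(m, k) | \rank (Kr AB.1 AB.2) == r].

Lemma Ncount k r m : (r <= k)%N ->
  (#|Nset k r m| * #|[set P : 'M[F]_(r, r) | row_free P]|)%N
  = (#|[set E : 'M[F]_(r, k) | row_free E]| * (#|Rset F r m| * q ^ (k * (k - r))))%N.
Proof.
move=> rk.
pose c (AB : 'M[F]_k * 'M[F]_(m, k)) (E : 'M[F]_(r, k)) :=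
  (row_free E && (Kr AB.1 AB.2 == E)%MS).
have L : (\sum_AB \sum_E (c AB E : nat))%N =
   (#|Nset k r m| * #|[set P : 'M[F]_(r, r) | row_free P]|)%N.
  rewrite (eq_bigr (fun AB => if AB \in Nset k r m then
       #|[set P : 'M[F]_(r, r) | row_free P]| else 0%N)); last first.
    move=> AB _; rewrite sum_bool_card inE.
    case: eqP => [rK | nrK]; first exact: card_bases.
    apply/eqP; rewrite cards_eq0; apply/eqP/setP => E; rewrite !inE.
    apply/negP => /andP [fE /eqmxP KE]; apply: nrK; rewrite KE; exact/eqP.
  by rewrite -big_mkcond sum_nat_const.
have R : (\sum_E \sum_AB (c AB E : nat))%N =
   (#|[set E : 'M[F]_(r, k) | row_free E]| * (#|Rset F r m| * q ^ (k * (k - r))))%N.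
  rewrite (eq_bigr (fun E => if E \in [set E : 'M[F]_(r, k) | row_free E] then
       (#|Rset F r m| * q ^ (k * (k - r)))%N else 0%N)); last first.
    move=> E _; rewrite sum_bool_card inE /c.
    case fE: (row_free E); last by apply/eqP; rewrite cards_eq0; apply/eqP/setP => x; rewrite !inE.
    rewrite -(fiber_E m fE rk); apply: eq_card => x; rewrite !inE.
    by [].
  by rewrite -big_mkcond sum_nat_const.
by rewrite -L -R exchange_big.
Qed.
End Count.

Section QAlg.
Variable q : nat.
Hypothesis q1 : (1 < q)%N.
Local Notation Q := (q%:R : rat).

Lemma Q1 : 1 < Q. Proof. by rewrite ltr1n. Qed.
Lemma Q0 : Q != 0. Proof. by rewrite pnatr_eq0 -lt0n ltnW. Qed.
Lemma Qn1 n : (0 < n)%N -> Q ^+ n - 1 != 0.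
Proof.
move=> n0; rewrite subr_eq0 gt_eqF // exprn_egt1 ?Q1 //; by rewrite -lt0n.
Qed.

Definition Gr r : rat := \prod_(i < r) (Q ^+ r - Q ^+ i).
Definition Fr r k : rat := \prod_(i < r) (Q ^+ k - Q ^+ i).
Definition Num k t : rat := \prod_(i < t) (Q ^+ (k - i) - 1).
Definition Den t : rat := \prod_(i < t) (Q ^+ i.+1 - 1).

Lemma qbinomE k r : qbinom q k r = Num k r / Den r.
Proof.
rewrite /qbinom -prodf_div; apply: eq_bigr => i _; by rewrite !natrX.
Qed.

Lemma Den_neq0 t : Den t != 0.
Proof. by rewrite prodf_seq_neq0; apply/allP => i _; apply: Qn1. Qed.

Lemma NumS k t : Num k t.+1 = Num k t * (Q ^+ (k - t) - 1).
Proof. by rewrite /Num big_ord_recr. Qed.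
Lemma DenS t : Den t.+1 = Den t * (Q ^+ t.+1 - 1).
Proof. by rewrite /Den big_ord_recr. Qed.
Lemma NumSS k t : Num k.+1 t.+1 = (Q ^+ k.+1 - 1) * Num k t.
Proof. by rewrite /Num big_ord_recl subn0; congr (_ * _); apply: eq_bigr => i _; rewrite lift0 subSS. Qed.

Lemma qb0 k : qbinom q k 0 = 1.
Proof. by rewrite /qbinom big_ord0. Qed.

Lemma qb_over k : qbinom q k k.+1 = 0.
Proof. by rewrite qbinomE NumS subnn expr0 subrr mulr0 mul0r. Qed.

Lemma pascal k t : (t <= k)%N ->
  qbinom q k.+1 t.+1 = Q ^+ (k - t) * qbinom q k t + qbinom q k t.+1.
Proof.
move=> tk; rewrite !qbinomE NumSS NumS DenS.
have e : Q ^+ k.+1 = Q ^+ (k - t) * Q ^+ t.+1 by rewrite -exprD; congr (_ ^+ _); lia.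
rewrite e; have := Den_neq0 t; have := Qn1 (ltn0Sn t).
set x := Q ^+ (k - t); set y := Q ^+ t.+1 => h1 h2.
field; by rewrite h1 h2.
Qed.

Lemma Gr_S r : Gr r.+1 = (Q ^+ r.+1 - 1) * Q ^+ r * Gr r.
Proof.
rewrite /Gr big_ord_recl expr0 -mulrA; congr (_ * _).
rewrite (eq_bigr (fun i : 'I_r => Q * (Q ^+ r - Q ^+ i))) ?prodrMl ?card_ord //.
by move=> i _; rewrite lift0 mulrBr -!exprS.
Qed.

Lemma Gr_neq0 r : Gr r != 0.
Proof.
elim: r => [|r IH]; first by rewrite /Gr big_ord0 oner_neq0.
by rewrite Gr_S !mulf_neq0 ?Qn1 ?expf_neq0 ?Q0.
Qed.

Lemma FrS r k : Fr r.+1 k = Fr r k * (Q ^+ k - Q ^+ r).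
Proof. by rewrite /Fr big_ord_recr. Qed.

Lemma qb_Fr k r : (r <= k)%N -> qbinom q k r * Gr r = Fr r k.
Proof.
elim: r => [|r IH] rk; first by rewrite qb0 /Gr /Fr !big_ord0 mulr1.
rewrite FrS -IH ?(ltnW rk) // Gr_S !qbinomE NumS DenS.
have e : Q ^+ k = Q ^+ (k - r) * Q ^+ r by rewrite -exprD; congr (_ ^+ _); lia.
rewrite e; have := Den_neq0 r; have := Qn1 (ltn0Sn r).
set x := Q ^+ (k - r); set y := Q ^+ r.+1 => h1 h2.
field; by rewrite h1 h2.
Qed.

Lemma qb_kk k : qbinom q k k = 1.
Proof.
have := qb_Fr (leqnn k); rewrite /Fr -/(Gr k) => h.
by apply: (mulIf (Gr_neq0 k)); rewrite h mul1r.
Qed.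

Definition Pm m s : rat := \prod_(j < s) (Q ^+ (s + m) - Q ^+ j.+1).

Lemma PmS m s : Pm m s.+1 = Q ^+ s.+1 * (Q ^+ (s + m) - 1) * Pm m s.
Proof.
rewrite /Pm (eq_bigr (fun j : 'I_s.+1 => Q * (Q ^+ (s + m) - Q ^+ j))); last first.
  by move=> j _; rewrite mulrBr -!exprS addSn.
rewrite prodrMl card_ord -mulrA; congr (_ * _).
by rewrite big_ord_recl expr0; congr (_ * _); apply: eq_bigr => j _; rewrite lift0.
Qed.

Lemma ident m k :
  \sum_(r < k.+1) qbinom q k r * Q ^+ (k * (k - r)) * Pm m r = Q ^+ (k * (k + m)).
Proof.
elim: k => [|k IH].
  by rewrite big_ord_recl big_ord0 qb0 /Pm big_ord0 !mul1r addr0 expr0.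
pose X t := Q ^+ (k.+1 * (k.+1 - t)) * Pm m t.
have -> : \sum_(r < k.+2) qbinom q k.+1 r * Q ^+ (k.+1 * (k.+1 - r)) * Pm m r
        = \sum_(r < k.+2) qbinom q k.+1 r * X r.
  by apply: eq_bigr => r _; rewrite mulrA.
rewrite big_ord_recl qb0 /=.
rewrite (eq_bigr (fun s : 'I_k.+1 => Q ^+ (k - s) * qbinom q k s * X s.+1
                      + qbinom q k s.+1 * X s.+1)); last first.
  by move=> s _; rewrite /bump leq0n add1n pascal ?mulrDl // -ltnS.
rewrite big_split /= addrCA.
have -> : 1 * X 0%N + \sum_(s < k.+1) qbinom q k s.+1 * X s.+1
        = \sum_(s < k.+1) qbinom q k s * X s.
  rewrite -{1}(qb0 k).
  rewrite -(big_ord_recl k.+1 (fun s => qbinom q k s * X s)) big_ord_recr /=.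
  by rewrite qb_over mul0r addr0.
rewrite -big_split /=.
rewrite (eq_bigr (fun i : 'I_k.+1 => Q ^+ (k.*2.+1 + m) *
                     (qbinom q k i * Q ^+ (k * (k - i)) * Pm m i))); last first.
  move=> i _; have ik : (i <= k)%N by rewrite -ltnS.
  rewrite /X PmS.
  have h1 : Q ^+ (k - i) * Q ^+ (k.+1 * (k.+1 - i.+1)) * Q ^+ i.+1
            = Q ^+ (k.+1 * (k.+1 - i)) by rewrite -!exprD; congr (_ ^+ _); nia.
  have h2 : Q ^+ (k.+1 * (k.+1 - i)) * Q ^+ (i + m)
            = Q ^+ (k.*2.+1 + m) * Q ^+ (k * (k - i)).
    by rewrite -!exprD; congr (_ ^+ _); rewrite -addnn; nia.
  transitivity (qbinom q k i * Pm m i *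
     ((Q ^+ (k - i) * Q ^+ (k.+1 * (k.+1 - i.+1)) * Q ^+ i.+1) * (Q ^+ (i + m) - 1)
       + Q ^+ (k.+1 * (k.+1 - i)))); first by ring.
  rewrite h1; transitivity (qbinom q k i * Pm m i *
     (Q ^+ (k.+1 * (k.+1 - i)) * Q ^+ (i + m))); first by ring.
  by rewrite h2; ring.
rewrite -mulr_sumr IH -exprD; congr (_ ^+ _); rewrite -addnn; nia.
Qed.
End QAlg.

Section Glue.
Variable F : finFieldType.
Local Notation q := #|F|.
Local Notation Q := (q%:R : rat).

Lemma q1 : (1 < q)%N.
Proof. by rewrite (cardD1 (0 : F)) (cardD1 (1 : F)) !inE oner_neq0. Qed.

Lemma total k m :
  (\sum_(r < k.+1) #|Nset F k r m|)%N = (q ^ (k * k) * q ^ (m * k))%N.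
Proof.
rewrite (eq_bigr (fun r : 'I_k.+1 => \sum_(AB : 'M[F]_k * 'M[F]_(m, k))
            ((\rank (Kr AB.1 AB.2) == r) : nat)))%N; last first.
  by move=> r _; rewrite sum_bool_card.
rewrite exchange_big /=.
rewrite (eq_bigr (fun _ => 1%N)); last first.
  move=> AB _; have lt : (\rank (Kr AB.1 AB.2) < k.+1)%N by rewrite ltnS rank_leq_col.
  rewrite (bigD1 (Ordinal lt)) //= eqxx big1 ?addn0 // => i ne.
  apply/eqP; rewrite eqb0; apply: contra ne => /eqP e.
  by apply/eqP/val_inj; rewrite /= e.
by rewrite sum1_card card_prod !card_mx.
Qed.

Lemma rowfree_natr r k : (r <= k)%N ->
  (#|[set E : 'M[F]_(r, k) | row_free E]|)%:R = Fr q r k.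
Proof.
move=> rk; rewrite card_rowfree // natr_prod; apply: eq_bigr => i _.
rewrite natrB ?natrX // leq_exp2l ?q1 //; exact: ltnW (leq_trans (ltn_ord i) rk).
Qed.

Lemma Nrat k r m : (r <= k)%N ->
  (#|Nset F k r m|)%:R = qbinom q k r * Q ^+ (k * (k - r)) * (#|Rset F r m|)%:R.
Proof.
move=> rk; have := congr1 (fun x : nat => x%:R : rat) (@Ncount F k r m rk).
rewrite !natrM rowfree_natr // rowfree_natr // natrX -(qb_Fr q1 rk) => h.
apply: (mulIf (Gr_neq0 q1 r)); rewrite h; ring.
Qed.

Lemma Rrat m k : (#|Rset F k m|)%:R = Pm q m k.
Proof.
elim/ltn_ind: k => k IH.
have := congr1 (fun x : nat => x%:R : rat) (total k m).
rewrite natr_sum natrM !natrX -exprD => tot.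
have eqS : \sum_(i < k) (#|Nset F k i m|)%:R
    = \sum_(i < k) qbinom q k i * Q ^+ (k * (k - i)) * Pm q m i.
  by apply: eq_bigr => i _; rewrite Nrat ?IH //; exact: ltnW.
have := ident q1 m k; rewrite (_ : (k * (k + m) = k * k + m * k)%N); last by nia.
rewrite -tot big_ord_recr /= [in RHS]big_ord_recr /= eqS => /addrI.
by rewrite Nrat // (qb_kk q1) subnn muln0 expr0 !mul1r => ->.
Qed.
End Glue.

Section Final.
Variable F : finFieldType.
Local Notation q := #|F|.
Local Notation Q := (q%:R : rat).

Lemma trmxX k (A : 'M[F]_k) j : (A ^+ j)^T = A^T ^+ j.
Proof.
elim: j => [|j IH]; first by rewrite !expr0 trmx1.
by rewrite exprS -mulmxE trmx_mul IH exprSr mulmxE.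
Qed.

Lemma rank_reach k m (A : 'M[F]_k) (B : 'M[F]_(k, m)) :
  \rank (reach_mx A B) = \rank (Kr A^T B^T).
Proof.
rewrite -mxrank_tr /reach_mx tr_mxrow eqmx_col /Kr /Kn.
by congr (\rank _); apply: eq_bigr => i _; rewrite trmx_mul trmxX.
Qed.

Lemma card_reach k m r :
  #|[set AB : 'M[F]_k * 'M[F]_(k, m) | \rank (reach_mx AB.1 AB.2) == r]|
  = #|Nset F k r m|.
Proof.
pose f (x : 'M[F]_k * 'M[F]_(m, k)) : 'M[F]_k * 'M[F]_(k, m) := (x.1^T, x.2^T).
have finj : injective f.
  by move=> [A B] [A' B'] [/trmx_inj -> /trmx_inj ->].
rewrite -(card_imset (Nset F k r m) finj); apply: eq_card => [[A B]].
rewrite inE /=; apply/idP/imsetP => [h | [[A' B'] ]].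
  by exists (A^T, B^T); rewrite /f /= ?trmxK // inE /= -rank_reach.
by rewrite inE /= => h [-> ->]; rewrite rank_reach /= !trmxK.
Qed.

Lemma prod_shift a r (G : nat -> rat) :
  \prod_(a <= i < a + r) G i = \prod_(i < r) G (a + i).
Proof.
elim: r => [|r IH]; first by rewrite addn0 big_geq // big_ord0.
by rewrite addnS big_nat_recr ?leq_addr //= IH big_ord_recr.
Qed.

Lemma final_alg k r n : (r <= k)%N -> (k < n)%N ->
  Q ^+ (k * (k - r)) * Pm q (n - k) r
  = (q ^ ((k - r) ^ 2))%:R * \prod_(k - r + 1 <= i < k.+1) ((q ^ n)%:R - (q ^ i)%:R).
Proof.
move=> rk kn.
have -> : \prod_(k - r + 1 <= i < k.+1) ((q ^ n)%:R - (q ^ i)%:R : rat)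
    = \prod_(i < r) ((q ^ n)%:R - (q ^ (k - r + 1 + i))%:R).
  by rewrite -(prod_shift (k - r + 1) r (fun i => (q ^ n)%:R - (q ^ i)%:R)) (_ : (k - r + 1 + r = k.+1)%N) //; lia.
rewrite (eq_bigr (fun i : 'I_r => Q ^+ (k - r) * (Q ^+ (r + (n - k)) - Q ^+ i.+1))); last first.
  move=> i _; rewrite !natrX mulrBr -!exprD; congr (_ ^+ _ - _ ^+ _); lia.
rewrite prodrMl card_ord natrX -exprM mulrA -exprD.
rewrite (_ : (k * (k - r) = (k - r) ^ 2 + (k - r) * r)%N); last by nia.
by [].
Qed.
End Final.

Theorem theorem4 (F : finFieldType) (n k r : nat) :
  (1 <= k)%N -> (k < n)%N -> (r <= k)%N ->
  (#|[set AB : 'M[F]_k * 'M[F]_(k, n - k) |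
        \rank (reach_mx AB.1 AB.2) == r]|)%:R
  = qbinom #|F| k r * (#|F| ^ ((k - r) ^ 2))%:R
    * \prod_(k - r + 1 <= i < k.+1) ((#|F| ^ n)%:R - (#|F| ^ i)%:R) :> rat
  /\
  (#|[set AB : 'M[F]_k * 'M[F]_(k, n - k) |
        \rank (reach_mx AB.1 AB.2) == k]|)%:R
  = \prod_(1 <= i < k.+1) ((#|F| ^ n)%:R - (#|F| ^ i)%:R) :> rat.
Proof.
move=> k1 kn rk; split.
  by rewrite card_reach Nrat // Rrat -!mulrA final_alg.
rewrite card_reach Nrat // Rrat (qb_kk (q1 F)) mul1r final_alg //.
by rewrite subnn /= mul1r.
Qed.
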